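(* Let $G=(V,E)$ be an $n$-vertex finite simple undirected graph with distinct vertex IDs, whose neighborhood independence is bounded by a constant $c$, and let $K$ be a positive integer with $\delta(G)\ge K$. Using the procedure Efficient-VM with parameter $K$, each active vertex increases its virtual memory by a factor $K$: in the round in which its color class is active, it has exclusive use of the memories of the $K$ neighbors it selected. The computation requires $O(\log^* n + K^4)$ rounds.
   Context: $\Gamma(v)$ is the neighbor set of $v$, $\deg(v)=|\Gamma(v)|$, $\delta(G)=\min_v\deg(v)$. The neighborhood independence of $G$ is the maximum over $v$ of the size of an independent set contained in $\Gamma(v)$. Model: synchronous CONGEST model ($O(\log n)$-bit messages per edge per round). Operation $K$-Next-Modulo$(v,\Gamma(v),K)$: list $\Gamma(v)\cup\{v\}$ in ascending ID order as $u_1,\dots,u_d$ ($d=\deg(v)+1$) with $v=u_i$; $v$ selects $u_{i+1},\dots,u_{i+K}$, indices cyclic modulo $d$. Procedure Efficient-VM$(G,K)$: (1) every vertex selects its $K$ neighbors by $K$-Next-Modulo (one round); let $G'=(V,E')$ with $E'$ the set of edges $\{v,u\}$ such that $v$ selected $u$, and $\Delta'$ its maximum degree; (2) compute a 2-hop coloring of $G'$ (vertices at distance at most $2$ in $G'$ get distinct colors) with Linial's algorithm on $G'^2$ ($O(\Delta'^4)$ colors, $\log^* n+O(1)$ rounds); (3) process the color classes one per round in round-robin order; in the round of a class, exactly its vertices are active and each distributes its backup data to the $K$ vertices it selected. *)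

(* Defs.v *)
From mathcomp Require Import all_boot.
Set Implicit Arguments. Unset Strict Implicit. Unset Printing Implicit Defensive.

Section Defs.
Variable T : finType.
Variable e : rel T.
Variable id : T -> nat.

Definition simple_graph := symmetric e /\ irreflexive e.

Definition nbhd (v : T) : {set T} := [set u | e v u].
Definition deg (v : T) : nat := #|nbhd v|.

Definition independent (S : {set T}) : Prop :=
  forall x y, x \in S -> y \in S -> ~~ e x y.

Definition nbhd_indep_le (c : nat) : Prop :=
  forall v (S : {set T}), S \subset nbhd v -> independent S -> #|S| <= c.

Definition id_sorted_closed_nbhd (v : T) : seq T :=
  sort [rel x y | id x <= id y] (enum (v |: nbhd v)).

(* K-Next-Modulo(v, Gamma(v), K): with v = u_i, select u_{i+1}, ..., u_{i+K},
   indices taken cyclically modulo d (0-based here). *)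
Definition next_modulo (K : nat) (v : T) : {set T} :=
  let s := id_sorted_closed_nbhd v in
  let d := size s in
  let i := index v s in
  [set u | [exists j : 'I_K, u == nth v s ((i + j.+1) %% d)]].

(* G' = (V, E'), {v,u} in E' iff v selected u (or u selected v) *)
Definition sel_edge (K : nat) : rel T :=
  [rel v u | (u \in next_modulo K v) || (v \in next_modulo K u)].

Definition sel_maxdeg (K : nat) : nat :=
  \max_(v : T) #|[set u | sel_edge K v u]|.

Definition two_hop_coloring (K : nat) (col : T -> nat) : Prop :=
  forall v w, v != w ->
    (sel_edge K v w || [exists x, sel_edge K v x && sel_edge K x w]) ->
    col v != col w.

(* number of color classes (= rounds of step (3), one class per round) *)
Definition num_colors (col : T -> nat) : nat := size (undup [seq col v | v <- enum T]).

End Defs.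

Fixpoint log_star_rec (fuel n : nat) : nat :=
  match fuel with
  | 0 => 0
  | f.+1 => if n <= 1 then 0 else (log_star_rec f (trunc_log 2 n)).+1
  end.
Definition log_star (n : nat) : nat := log_star_rec n n.

(* Main.v *)
Require Import Defs.
From mathcomp Require Import all_boot zify.
Set Implicit Arguments. Unset Strict Implicit. Unset Printing Implicit Defensive.

Section Aux.
Variables (T : finType) (e : rel T) (id : T -> nat).
Hypothesis (esymm : symmetric e) (irr : irreflexive e) (inj : injective id).

Local Notation s v := (id_sorted_closed_nbhd e id v).

Lemma s_uniq v : uniq (s v).
Proof. by rewrite /id_sorted_closed_nbhd sort_uniq enum_uniq. Qed.

Lemma mem_s v x : (x \in s v) = (x \in v |: nbhd e v).
Proof. by rewrite /id_sorted_closed_nbhd mem_sort mem_enum. Qed.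

Lemma size_s v : size (s v) = (deg e v).+1.
Proof.
rewrite /id_sorted_closed_nbhd size_sort -cardE cardsU1 /deg.
by rewrite /nbhd inE irr.
Qed.

Lemma s_sorted v : sorted [rel x y | id x <= id y] (s v).
Proof. apply: sort_sorted => x y /=; exact: leq_total. Qed.

Lemma s_lt v a b : a < b -> b < size (s v) ->
  id (nth v (s v) a) < id (nth v (s v) b).
Proof.
move=> ab bs.
have as' : a < size (s v) by apply: ltn_trans bs.
have := @sorted_ltn_nth _ [rel x y | id x <= id y] (fun x y z => @leq_trans (id x) (id y) (id z))
  v (s v) (s_sorted v) a b as' bs ab.
rewrite /= leq_eqVlt => /orP [/eqP H|//].
have := nth_uniq v as' bs (s_uniq v).
by rewrite (inj H) eqxx => /esym /eqP; lia.
Qed.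

Lemma s_lt_inv v a b : a < size (s v) -> b < size (s v) ->
  id (nth v (s v) a) < id (nth v (s v) b) -> a < b.
Proof.
move=> as' bs H; case: (ltngtP a b) => // [ba|ab].
  by have := s_lt ba as'; lia.
by move: H; rewrite ab ltnn.
Qed.

Lemma nm_mem K v u : (u \in next_modulo e id K v) =
  [exists j : 'I_K, u == nth v (s v) ((index v (s v) + j.+1) %% size (s v))].
Proof. by rewrite /next_modulo inE. Qed.

Lemma mod_cases (m d : nat) : m < d.*2 ->
  (m %% d = m /\ m < d) \/ (m %% d = m - d /\ d <= m).
Proof.
move=> h; case: (ltnP m d) => hm; first by left; rewrite modn_small.
right; split=> //.
have -> : m = (m - d) + d by rewrite subnK.
rewrite modnDr addnK modn_small //; lia.
Qed.

Lemma nm_basic K v : K <= deg e v ->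
  next_modulo e id K v \subset nbhd e v /\ #|next_modulo e id K v| = K.
Proof.
move=> Kd.
set d := size (s v); set i := index v (s v).
have vs : v \in s v by rewrite mem_s !inE eqxx.
have id' : i < d by rewrite /i /d index_mem.
have hd : d = (deg e v).+1 by rewrite /d size_s.
have nvi : nth v (s v) i = v by rewrite nth_index.
pose g (j : 'I_K) := (i + j.+1) %% d.
have gd j : g j < d by rewrite /g ltn_mod; lia.
have gi j : g j != i.
  have := @mod_cases (i + j.+1) d; rewrite /g; have := ltn_ord j; lia.
have ginj : injective g.
  move=> j1 j2; rewrite /g => H; apply: val_inj => /=.
  have := @mod_cases (i + j1.+1) d; have := @mod_cases (i + j2.+1) d.
  have := ltn_ord j1; have := ltn_ord j2; lia.
pose f (j : 'I_K) := nth v (s v) (g j).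
have finj : injective f.
  move=> j1 j2 /eqP; rewrite /f nth_uniq ?gd ?s_uniq // => /eqP; exact: ginj.
have E : next_modulo e id K v = [set f j | j in 'I_K].
  apply/setP => u; rewrite nm_mem; apply/existsP/imsetP.
    by case=> j /eqP ->; exists j.
  by case=> j _ ->; exists j.
rewrite E card_imset // card_ord; split=> //.
apply/subsetP => u /imsetP [j _ ->].
have : f j \in s v by rewrite /f mem_nth ?gd.
rewrite mem_s !inE => /orP [/eqP H|//].
have := nth_uniq v (gd j) id' (s_uniq v).
by rewrite /f in H; rewrite H nvi eqxx => /esym/eqP; have := gi j; rewrite /eq_op /=; lia.
Qed.

Lemma sel_ab K v u : K <= deg e v -> u \in next_modulo e id K v ->
  (id v < id u ->
   #|[set w in nbhd e v | (id v < id w) && (id w < id u)]| < K) /\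
  (id u < id v ->
   #|[set w in nbhd e v | (id v < id w) || (id w < id u)]| < K).
Proof.
move=> Kd.
set d := size (s v); set i := index v (s v).
have vs : v \in s v by rewrite mem_s !inE eqxx.
have id' : i < d by rewrite /i /d index_mem.
have hd : d = (deg e v).+1 by rewrite /d size_s.
have nvi : nth v (s v) i = v by rewrite nth_index.
rewrite nm_mem => /existsP [j /eqP ->].
set k := (i + j.+1) %% d.
have kd : k < d by rewrite /k ltn_mod; lia.
have jK := ltn_ord j.
have MC := @mod_cases (i + j.+1) d.
have memw w : w \in nbhd e v -> w \in s v by move=> h; rewrite mem_s in_setU1 h orbT.
split.
- move=> hvu.
  have ik : i < k by apply: (s_lt_inv id' kd); rewrite nvi.
  have hk : k = i + j.+1 by rewrite /k; lia.
  apply: (@leq_ltn_trans j) => //.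
  have H := leq_imset_card (fun t : 'I_j => nth v (s v) (i.+1 + t)) 'I_j.
  rewrite card_ord in H; apply: leq_trans H; apply: subset_leq_card; apply/subsetP => w.
  rewrite inE => /andP [wN /andP [h1 h2]].
  have ws := memw w wN.
  set t0 := index w (s v).
  have t0d : t0 < d by rewrite /t0 index_mem.
  have nwt : nth v (s v) t0 = w by rewrite nth_index.
  have it : i < t0 by apply: (s_lt_inv id' t0d); rewrite nvi nwt.
  have tk : t0 < k by apply: (s_lt_inv t0d kd); rewrite nwt.
  have tj : t0 - i.+1 < j by lia.
  apply/imsetP; exists (Ordinal tj) => //=.
  by rewrite subnKC.
- move=> huv.
  have ki : k < i by apply: (s_lt_inv kd id'); rewrite nvi.
  have hk : k = i + j.+1 - d /\ d <= i + j.+1 by rewrite /k; lia.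
  apply: (@leq_ltn_trans j) => //.
  have H := leq_imset_card (fun t : 'I_j => nth v (s v) ((i.+1 + t) %% d)) 'I_j.
  rewrite card_ord in H; apply: leq_trans H; apply: subset_leq_card; apply/subsetP => w.
  rewrite inE => /andP [wN h].
  have ws := memw w wN.
  set t0 := index w (s v).
  have t0d : t0 < d by rewrite /t0 index_mem.
  have nwt : nth v (s v) t0 = w by rewrite nth_index.
  case/orP: h => h.
  + have it : i < t0 by apply: (s_lt_inv id' t0d); rewrite nvi nwt.
    have tj : t0 - i.+1 < j by lia.
    apply/imsetP; exists (Ordinal tj) => //=.
    by rewrite subnKC // modn_small.
  + have tk : t0 < k by apply: (s_lt_inv t0d kd); rewrite nwt.
    have tj : t0 + d - i.+1 < j by lia.
    apply/imsetP; exists (Ordinal tj) => //=.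
    have -> : i.+1 + (t0 + d - i.+1) = t0 + d by lia.
    by rewrite modnDr modn_small.
Qed.

Lemma degen K c : forall X : {set T},
  (forall Y : {set T}, Y \subset X -> independent e Y -> #|Y| <= c) ->
  (forall x, x \in X -> #|[set y in X | e x y && (id x < id y)]| < K) ->
  #|X| <= c * K.
Proof.
elim: c => [|c IH] X HI HF.
  case: (set_0Vmem X) => [->|[x xX]]; first by rewrite cards0.
  have : #|[set x]| <= 0.
    apply: HI; first by rewrite sub1set.
    by move=> a b; rewrite !inE => /eqP -> /eqP ->; rewrite irr.
  by rewrite cards1.
case: (set_0Vmem X) => [->|[x0 x0X]]; first by rewrite cards0.
pose x := [arg min_(y < x0 in X) id y].
have [xX xmin] : x \in X /\ forall y, y \in X -> id x <= id y.
  by rewrite /x; case: arg_minnP => // y yX H.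
set B := x |: [set y in X | e x y].
set X' := X :\: B.
have HB : #|B| <= K.
  rewrite cardsU1; have := HF x xX.
  have -> : [set y in X | e x y] = [set y in X | e x y && (id x < id y)].
    apply/setP => y; rewrite !inE; case yX: (y \in X) => //=.
    case exy : (e x y) => //=.
    rewrite ltn_neqAle xmin // andbT.
    case: eqP => [/inj H|//]; by rewrite H irr in exy.
  case: (x \in _) => /=; lia.
have HX' : #|X'| <= c * K.
  apply: IH.
  - move=> Y YX' YI.
    have xY : x \notin Y.
      apply/negP => xY; move/subsetP: YX' => /(_ x xY); rewrite !inE eqxx; by [].
    have := HI (x |: Y).
    rewrite cardsU1 xY add1n ltnS; apply.
      apply/subsetP => y; rewrite !inE => /orP [/eqP ->//|yY].
      by move/subsetP: YX' => /(_ y yY); rewrite !inE => /andP [].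
    move=> a b; rewrite !inE => /orP [/eqP ->|aY] /orP [/eqP ->|bY].
    + by rewrite irr.
    + move/subsetP: YX' => /(_ b bY); rewrite !inE negb_or => /andP [/andP [_ H] bX].
      by rewrite bX /= in H.
    + move/subsetP: YX' => /(_ a aY); rewrite !inE negb_or => /andP [/andP [_ H] aX].
      by rewrite aX /= in H; rewrite esymm.
    + exact: YI.
  - move=> y; rewrite inE => /andP [_ yX].
    apply: leq_ltn_trans (HF y yX); apply: subset_leq_card; apply/subsetP => z.
    by rewrite !inE => /andP [/andP [_ ->] ->].
have : #|X| <= #|X'| + #|B|.
  apply: leq_trans (leq_card_setU X' B).1; apply: subset_leq_card; apply/subsetP => y yX.
  by rewrite !inE yX; case: (y == x); case: (e x y).
rewrite mulSn; lia.
Qed.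

Lemma maxdeg_bound K c : (forall v, K <= deg e v) -> nbhd_indep_le e c ->
  sel_maxdeg e id K <= (c + c + 1) * K.
Proof.
move=> Kd HI; apply/bigmax_leqP => v _.
have nmN u : next_modulo e id K u \subset nbhd e u by case: (nm_basic (Kd u)).
have inN u : v \in next_modulo e id K u -> e v u.
  by move=> h; move/subsetP: (nmN u) => /(_ v h); rewrite inE esymm.
set S1 := [set u | (v \in next_modulo e id K u) && (id u < id v)].
set S2 := [set u | (v \in next_modulo e id K u) && (id v < id u)].
have indep (S : {set T}) : S \subset [set u | v \in next_modulo e id K u] ->
    forall Y : {set T}, Y \subset S -> independent e Y -> #|Y| <= c.
  move=> SS Y YS YI; apply: (HI v) => //; apply/subsetP => y yY.
  have := subsetP SS y (subsetP YS y yY); rewrite [in X in X -> _]inE => h; rewrite inE; exact: inN.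
have H1 : #|S1| <= c * K.
  apply: degen.
    by apply: indep; apply/subsetP => u; rewrite !inE => /andP [].
  move=> x; rewrite inE => /andP [hx hxv].
  have [A _] := sel_ab (Kd x) hx.
  apply: leq_ltn_trans (A hxv); apply: subset_leq_card; apply/subsetP => y.
  by rewrite !inE => /andP [/andP [_ ->] /andP [-> ->]].
have H2 : #|S2| <= c * K.
  apply: degen.
    by apply: indep; apply/subsetP => u; rewrite !inE => /andP [].
  move=> x; rewrite inE => /andP [hx hxv].
  have [_ A] := sel_ab (Kd x) hx.
  apply: leq_ltn_trans (A hxv); apply: subset_leq_card; apply/subsetP => y.
  by rewrite !inE => /andP [_ /andP [-> ->]].
have H0 : #|next_modulo e id K v| = K by case: (nm_basic (Kd v)).
have : #|[set u | sel_edge e id K v u]| <= #|next_modulo e id K v| + (#|S1| + #|S2|).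
  apply: (@leq_trans #|next_modulo e id K v :|: (S1 :|: S2)|); last first.
    apply: leq_trans (leq_card_setU _ _).1 _; rewrite leq_add2l; exact: (leq_card_setU _ _).1.
  apply: subset_leq_card; apply/subsetP => u.
  rewrite [u \in [set _ | _]]inE /= => /orP [h|hu]; rewrite in_setU; first by rewrite h.
  have evu := inN u hu.
  rewrite in_setU /S1 /S2 [u \in [set _ | (_ \in _) && (id _ < id v)]]inE [u \in [set _ | (_ \in _) && (id v < id _)]]inE hu /=.
  have : id u != id v by apply/eqP => /inj E; rewrite E irr in evu.
  by rewrite neq_ltn => /orP [->|->]; rewrite ?orbT.
rewrite H0 !mulnDl mul1n => H; lia.
Qed.

End Aux.

Theorem theorem2 :
  forall c A B : nat, exists C : nat,
  forall (T : finType) (e : rel T) (id : T -> nat) (K : nat)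
         (col : T -> nat) (L : nat),
    simple_graph e ->
    injective id ->
    nbhd_indep_le e c ->
    0 < K ->
    (forall v : T, K <= deg e v) ->
    (* output of Linial's algorithm on G'^2 *)
    two_hop_coloring e id K col ->
    num_colors col <= A * (sel_maxdeg e id K) ^ 4 ->
    L <= log_star #|T| + B ->
    (* each vertex obtains the memories of K distinct neighbors *)
    (forall v : T, next_modulo e id K v \subset nbhd e v /\
                   #|next_modulo e id K v| = K) /\
    (* exclusive use within an active color class *)
    (forall v w : T, v != w -> col v = col w ->
       [disjoint next_modulo e id K v & next_modulo e id K w] /\
       w \notin next_modulo e id K v) /\
    (* O(log* n + K^4) rounds *)
    1 + L + num_colors col <= C * (log_star #|T| + K ^ 4).
Proof.
move=> c A B; exists (2 + B + A * (c + c + 1) ^ 4).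
move=> T e id K col L [esymm irr] inj HI K0 Kd Hcol Hnc HL.
split; first by move=> v; exact: (nm_basic id irr).
split.
  move=> v w vw cvw; split.
    rewrite disjoint_subset; apply/subsetP => x hv; rewrite inE; apply/negP => hw.
    suff: col v != col w by rewrite cvw eqxx. apply: (Hcol v w vw).
    apply/orP; right; apply/existsP; exists x.
    by rewrite /sel_edge /= hv hw orbT.
  apply/negP => h; have := Hcol v w vw; rewrite /sel_edge /= h cvw eqxx.
  by move=> /(_ isT).
have HD := maxdeg_bound esymm irr inj Kd HI.
have HD4 : sel_maxdeg e id K ^ 4 <= (c + c + 1) ^ 4 * K ^ 4.
  by rewrite -expnMn leq_exp2r.
have HK : 1 <= K ^ 4 by rewrite expn_gt0 K0.
move: Hnc HL HD4 HK.
move: (num_colors col) (sel_maxdeg e id K ^ 4) (log_star #|T|) ((c + c + 1) ^ 4) (K ^ 4) => n D l Q P.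
nia.
Qed.
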